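(* Let $p_1,p_2$ be distinct primes with $p_1\equiv p_2\equiv 1\pmod 4$ and let $\varepsilon_2=x+y\sqrt{p_1p_2}$ (with $x,y$ integers or half-integers) be the fundamental unit of $\mathbb{Q}(\sqrt{p_1p_2})$. If $\varepsilon_2$ has norm $1$, then neither $x+1$ nor $x-1$ is a square in $\mathbb{N}$. *)

(* Defs.v *)
(* The real quadratic field Q(sqrt d) is realised inside algC,
   with sqrt d := sqrtC d (the nonnegative square root). *)
From HB Require Import structures.
From mathcomp Require Import all_boot all_order all_algebra all_field.
Set Implicit Arguments. Unset Strict Implicit. Unset Printing Implicit Defensive.
Import Order.TTheory GRing.Theory Num.Theory.
Local Open Scope ring_scope.

Definition qelt (d : nat) (a b : int) : algC :=
  (a%:~R + b%:~R * sqrtC (d%:R)) / 2%:R.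

(* For squarefree d = 1 mod 4, the ring of integers is Z[(1+sqrt d)/2], whose
   elements are exactly (a + b sqrt d)/2 with a = b mod 2; the norm of
   (a + b sqrt d)/2 is (a^2 - d b^2)/4. *)
Definition in_OK (a b : int) : bool := ~~ odd `|a - b|%N.
Definition normQ (d : nat) (a b : int) : rat :=
  ((a ^+ 2 - (d%:Z) * b ^+ 2)%:~R) / 4%:R.

Definition is_unitOK (d : nat) (a b : int) : Prop :=
  in_OK a b /\ (normQ d a b = 1 \/ normQ d a b = -1).

Definition fundamental_unit (d : nat) (a b : int) : Prop :=
  is_unitOK d a b /\ 1 < qelt d a b /\
  forall a' b' : int, is_unitOK d a' b' -> 1 < qelt d a' b' ->
    qelt d a b <= qelt d a' b'.

(* Main.v *)
Require Import Defs.
From HB Require Import structures.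
From mathcomp Require Import all_boot all_order all_algebra all_field.
From mathcomp Require Import zify ring lra.
Import Order.TTheory GRing.Theory Num.Theory.
Local Open Scope ring_scope.

Lemma descent (D B M W : nat) : odd D -> odd W -> (0 < B)%N ->
  (D * B ^ 2 = 2 * M ^ 2 * W)%N -> False.
Proof.
move=> oD oW B0 E.
have D0 : (0 < D)%N by move: oD; case: (D).
have W0 : (0 < W)%N by move: oW; case: (W).
have M0 : (0 < M)%N.
  rewrite lt0n; apply/negP => /eqP M0; move: E; rewrite M0 (_ : 0 ^ 2 = 0)%N // muln0 mul0n => /eqP.
  rewrite muln_eq0 expn_eq0 /=; lia.
have := congr1 (logn 2) E.
rewrite !lognM ?expn_gt0 ?muln_gt0 ?D0 ?B0 ?M0 ?W0 //.
rewrite (@logn_coprime 2 D) ?(@logn_coprime 2 W) //; first by rewrite (_ : logn 2 2 = 1)%N //; lia.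
by rewrite coprime2n oW.
by rewrite coprime2n oD.
Qed.

Lemma core (q n B : nat) (s : int) : (s = 1 \/ s = -1) -> (0 < B)%N ->
  4 * (n%:Z ^+ 2 * (n%:Z ^+ 2 + 2 * s)) = (4 * q + 1)%N%:Z * B%:Z ^+ 2 -> False.
Proof.
move=> hs B0 E.
have [C [EB|EB]] : exists C, (B = 2*C+1 \/ B = 2*C)%N by exists (B %/ 2)%N; lia.
  by subst B; case: hs => hs; subst s; lia.
subst B.
have C0 : (0 < C)%N by lia.
have [m [En|En]] : exists m, (n = 2 * m \/ n = 2 * m+1)%N by exists (n %/ 2)%N; lia.
  subst n.
  have m0 : (0 < m)%N.
    rewrite lt0n; apply/negP => /eqP m0; subst m.
    have : (0 < C^2)%N by rewrite expn_gt0 C0.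
    nia.
  have m2 : (1 <= m^2)%N by rewrite expn_gt0 m0.
  case: hs => hs; subst s.
    apply: (@descent (4*q+1) C (2 * m) (2 * m^2+1)).
    - by rewrite oddD oddM.
    - by rewrite oddD oddM.
    - done.
    - lia.
  apply: (@descent (4*q+1) C (2 * m) (2 * m^2-1)).
  - by rewrite oddD oddM.
  - rewrite oddB ?oddM //; lia.
  - done.
  - lia.
subst n.
have [e [EC|EC]] : exists e, (C = 2*e \/ C = 2*e+1)%N by exists (C %/ 2)%N; lia.
  by subst C; case: hs => hs; subst s; lia.
by subst C; case: hs => hs; subst s; lia.
Qed.

Lemma sq_abs (b : int) : b ^+ 2 = (absz b)%:Z ^+ 2.
Proof. by case: b => k //; rewrite NegzE sqrrN. Qed.

Lemma a_of (a : int) (n : nat) (s : int) : s = 1 \/ s = -1 ->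
  (a%:~R / 2%:R : rat) + s%:~R = (n ^ 2)%N%:R -> a = 2 * (n^2)%N%:Z - 2 * s.
Proof.
move=> hs Hn; apply: (@intr_inj rat); rewrite rmorphB !rmorphM /=.
rewrite natrX in Hn.
change ((n:int)%:~R) with (n%:R : rat).
rewrite -expr2 -Hn. change ((2:int)%:~R) with (2%:R : rat). by field.
Qed.

Theorem mainTheorem8 (p1 p2 : nat) (a b : int) :
  prime p1 -> prime p2 -> p1 != p2 ->
  (p1 %% 4 = 1)%N -> (p2 %% 4 = 1)%N ->
  fundamental_unit (p1 * p2)%N a b ->
  normQ (p1 * p2)%N a b = 1 ->
  ~ (exists n : nat, (a%:~R / 2%:R : rat) + 1 = (n ^ 2)%N%:R) /\
  ~ (exists n : nat, (a%:~R / 2%:R : rat) - 1 = (n ^ 2)%N%:R).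
Proof.
move=> _ _ _ h1 h2 [_ [Hgt _]] hN.
have E : a ^+ 2 - (p1 * p2)%N%:Z * b ^+ 2 = 4.
  move: hN; rewrite /normQ => H.
  apply: (@intr_inj rat). rewrite -[_%:~R](@divfK _ (4%:R : rat)) // H mul1r.
  by [].
have hD : ((p1 * p2) %% 4 = 1)%N by rewrite -modnMm h1 h2.
have [q hq] : exists q, (p1 * p2 = 4 * q + 1)%N.
  by exists ((p1 * p2) %/ 4)%N; rewrite {1}(divn_eq (p1 * p2) 4) hD; lia.
rewrite hq in E Hgt.
have b0 : b != 0.
  apply/negP => /eqP b0; subst b.
  move: Hgt; rewrite /qelt mulr0z mul0r addr0 ltr_pdivlMr ?ltr0n // mul1r.
  change (2%:R : algC) with ((2:int)%:~R : algC); rewrite ltr_int => a2.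
  nia.
have B0 : (0 < absz b)%N by rewrite absz_gt0.
rewrite sq_abs in E.
split => -[n Hn].
  have Ha := @a_of a n 1 (or_introl erefl) Hn.
  apply: (@core q n (absz b) (-1) (or_intror erefl) B0). lia.
have Ha := @a_of a n (-1) (or_intror erefl) Hn.
apply: (@core q n (absz b) 1 (or_introl erefl) B0). lia.
Qed.
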